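(* Let $T$ be a filtered deterministic transducer with input category $\mathcal{C}$, output category $\mathcal{D}$, structure functor $F:\mathcal{C}\to\mathcal{D}^S$, primary input $\mathcal{C}$-signature $X\to Y$, auxiliary input $\mathcal{D}$-signatures $X_1\to Y_1,\dots,X_n\to Y_n$, output $\mathcal{D}$-signatures $X_1'\to Y_1',\dots,X_m'\to Y_m'$, input state space $S(F(X))$ and output state space $S(F(Y))$. Suppose that $S(F(Y))$ is finite, and that for every $x\in S(F(X))$ the linear coefficient $a$ of the degree $ax+b$ of every variable in $V_{F(X)}(x)$ is nonzero. Then there is a fixed integer $k$, not depending on $\deg(\alpha)$, such that for every $x\in S(F(X))$ and every primary input morphism $\alpha:X\to Y$ in $\mathcal{C}$, in each of the morphisms assigned by the output function $V_{F(\alpha)}(x)$ to the output signatures $X_j'\to Y_j'$ (which are variables at the state $S(F(\alpha))(x)$), the number of copies of the free generator corresponding to each auxiliary input $X_i\to Y_i$ is at most $k$.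
   Context: A filtered-morphism category is a locally small symmetric monoidal (here also copy-discard) category in which every morphism $f$ has a degree $\deg(f)\in\mathbb{N}$, identities have degree $0$, and $\deg(g\circ f)\le\deg(g)+\deg(f)$ (i.e. it is enriched over filtered sets, where a filtered set is a set with a function to $\mathbb{N}$ and morphisms are degree-non-increasing functions, with monoidal product the cartesian product with degrees added). Linear polynomials $ax+b$ with $a,b\in\mathbb{N}$ are partially ordered by $ax+b\le cx+d$ iff $a\le c$ and $b\le d$. Given a filtered-morphism category $\mathcal{D}$ and a list of signatures $X_i\to Y_i$ with degrees $a_ix+b_i$, the freely-generated $\mathbb{N}^2$-filtered category $\mathcal{D}[X_1\to Y_1,\dots]$ has the objects of $\mathcal{D}$, and morphisms built by composing and taking monoidal products of $\mathcal{D}$-morphisms and free generators $X_i\to Y_i$; the degree of such a morphism is the linear polynomial equal to the sum of the degrees $a_ix+b_i$ of the generator occurrences plus the ($\mathcal{D}$-)degrees of the maximal $\mathcal{D}$-parts (as constants). The filtered state category $\mathcal{D}^S$: an object $A$ consists of a set $S(A)$ (state space) and, for each $s\in S(A)$, a finite ordered list $V_A(s)$ of variables, i.e. pairs of $\mathcal{D}$-objects written $X\to Y$, each with a degree $ax+b$, $a,b\in\mathbb{N}$. A morphism $f:A\to B$ of degree $\ell\in\mathbb{N}$ consists of a function $S(f):S(A)\to S(B)$ (state transition) and, for each $s\in S(A)$, an output function $V_f(s)$ assigning to each variable $X'\to Y'$ at $S(f)(s)$ of degree $a'x+b'$ a morphism $X'\to Y'$ in the free $\mathbb{N}^2$-filtered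 category over $\mathcal{D}$ generated by the variables at $s$ (with their degrees), of degree at most $a'x+(a'\ell+b')$. Substituting actual $\mathcal{D}$-morphisms for the generators gives output $\mathcal{D}$-morphisms. Composition composes state transitions and substitutes output functions; the monoidal product takes products of state spaces and concatenates variable lists. A filtered functor is a functor $F$ between filtered-morphism categories with $\deg F(\alpha)\le\deg(\alpha)$ for all morphisms $\alpha$. A filtered deterministic transducer consists of filtered-morphism copy-discard categories $\mathcal{C}$ (input) and $\mathcal{D}$ (output), a primary input $\mathcal{C}$-signature $X\to Y$, auxiliary input $\mathcal{D}$-signatures $X_1\to Y_1,\dots,X_n\to Y_n$, output $\mathcal{D}$-signatures $X'_1\to Y'_1,\dots,X'_m\to Y'_m$, and a strong monoidal filtered functor $F:\mathcal{C}\to\mathcal{D}^S$ such that for every $s\in S(F(X))$ the variables at $s$ form a prefix of $X_1\to Y_1,\dots,X_n\to Y_n$, and for every $t\in S(F(Y))$ the list $X'_1\to Y'_1,\dots,X'_m\to Y'_m$ is a prefix of the variables at $t$. Given an input state $s\in S(F(X))$, a primary input $\alpha:X\to Y$ and auxiliary input morphisms $\beta_i:X_i\to Y_i$, the transducer outputs the state $S(F(\alpha))(s)$ and, for each output signature, the morphism assigned by $V_{F(\alpha)}(s)$ with the generators replaced by the $\beta_i$. *)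

(* Defs.v *)
From Stdlib Require Import List Arith PeanoNat.
Import ListNotations.

Set Implicit Arguments.

Record CDData := mkCD {
  cob : Type;
  chom : cob -> cob -> Type;
  cdeg : forall A B : cob, chom A B -> nat;
  cid : forall A : cob, chom A A;
  ccomp : forall A B C : cob, chom B C -> chom A B -> chom A C;
  ctens_ob : cob -> cob -> cob;
  cunit : cob;
  ctens : forall A B A' B' : cob,
      chom A B -> chom A' B' -> chom (ctens_ob A A') (ctens_ob B B');
  cassoc : forall A B C : cob,
      chom (ctens_ob A (ctens_ob B C)) (ctens_ob (ctens_ob A B) C);
  cassoc_inv : forall A B C : cob,
      chom (ctens_ob (ctens_ob A B) C) (ctens_ob A (ctens_ob B C));
  clunit : forall A : cob, chom (ctens_ob cunit A) A;
  clunit_inv : forall A : cob, chom A (ctens_ob cunit A);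
  crunit : forall A : cob, chom (ctens_ob A cunit) A;
  crunit_inv : forall A : cob, chom A (ctens_ob A cunit);
  cswap : forall A B : cob, chom (ctens_ob A B) (ctens_ob B A);
  ccopy : forall A : cob, chom A (ctens_ob A A);
  cdel : forall A : cob, chom A cunit
}.

Arguments chom {c} _ _.
Arguments cdeg {c A B} _.
Arguments cid {c} A.
Arguments ccomp {c A B C} _ _.
Arguments ctens {c A B A' B'} _ _.
Arguments ctens_ob {c} _ _.
Arguments cunit {c}.
Arguments cassoc {c} A B C.
Arguments cassoc_inv {c} A B C.
Arguments clunit {c} A.
Arguments clunit_inv {c} A.
Arguments crunit {c} A.
Arguments crunit_inv {c} A.
Arguments cswap {c} A B.
Arguments ccopy {c} A.
Arguments cdel {c} A.

Record CD_laws (D : CDData) : Prop := {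
  comp_id_l : forall (A B : cob D) (f : chom A B), ccomp (cid B) f = f;
  comp_id_r : forall (A B : cob D) (f : chom A B), ccomp f (cid A) = f;
  comp_assoc : forall (A B C E : cob D) (h : chom C E) (g : chom B C) (f : chom A B),
      ccomp h (ccomp g f) = ccomp (ccomp h g) f;
  deg_id : forall A : cob D, cdeg (cid A) = 0;
  deg_comp : forall (A B C : cob D) (g : chom B C) (f : chom A B),
      cdeg (ccomp g f) <= cdeg g + cdeg f;
  deg_tens : forall (A B A' B' : cob D) (f : chom A B) (g : chom A' B'),
      cdeg (ctens f g) <= cdeg f + cdeg g;
  deg_assoc : forall A B C : cob D, cdeg (cassoc A B C) = 0;
  deg_assoc_inv : forall A B C : cob D, cdeg (cassoc_inv A B C) = 0;
  deg_lunit : forall A : cob D, cdeg (clunit A) = 0;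
  deg_lunit_inv : forall A : cob D, cdeg (clunit_inv A) = 0;
  deg_runit : forall A : cob D, cdeg (crunit A) = 0;
  deg_runit_inv : forall A : cob D, cdeg (crunit_inv A) = 0;
  deg_swap : forall A B : cob D, cdeg (cswap A B) = 0;
  tens_id : forall A B : cob D, ctens (cid A) (cid B) = cid (ctens_ob A B);
  tens_comp : forall (A B C A' B' C' : cob D) (g : chom B C) (f : chom A B)
      (g' : chom B' C') (f' : chom A' B'),
      ctens (ccomp g f) (ccomp g' f') = ccomp (ctens g g') (ctens f f');
  assoc_iso1 : forall A B C : cob D, ccomp (cassoc_inv A B C) (cassoc A B C) = cid _;
  assoc_iso2 : forall A B C : cob D, ccomp (cassoc A B C) (cassoc_inv A B C) = cid _;
  lunit_iso1 : forall A : cob D, ccomp (clunit_inv A) (clunit A) = cid _;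
  lunit_iso2 : forall A : cob D, ccomp (clunit A) (clunit_inv A) = cid _;
  runit_iso1 : forall A : cob D, ccomp (crunit_inv A) (crunit A) = cid _;
  runit_iso2 : forall A : cob D, ccomp (crunit A) (crunit_inv A) = cid _;
  swap_invol : forall A B : cob D, ccomp (cswap B A) (cswap A B) = cid _;
  assoc_nat : forall (A B C A' B' C' : cob D) (f : chom A A') (g : chom B B') (h : chom C C'),
      ccomp (ctens (ctens f g) h) (cassoc A B C) = ccomp (cassoc A' B' C') (ctens f (ctens g h));
  lunit_nat : forall (A B : cob D) (f : chom A B),
      ccomp f (clunit A) = ccomp (clunit B) (ctens (cid cunit) f);
  runit_nat : forall (A B : cob D) (f : chom A B),
      ccomp f (crunit A) = ccomp (crunit B) (ctens f (cid cunit));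
  swap_nat : forall (A B A' B' : cob D) (f : chom A A') (g : chom B B'),
      ccomp (ctens g f) (cswap A B) = ccomp (cswap A' B') (ctens f g);
  pentagon : forall A B C E : cob D,
      ccomp (cassoc (ctens_ob A B) C E) (cassoc A B (ctens_ob C E))
      = ccomp (ctens (cassoc A B C) (cid E))
          (ccomp (cassoc A (ctens_ob B C) E) (ctens (cid A) (cassoc B C E)));
  triangle : forall A B : cob D,
      ccomp (ctens (crunit A) (cid B)) (cassoc A cunit B) = ctens (cid A) (clunit B);
  hexagon : forall A B C : cob D,
      ccomp (cassoc C A B) (ccomp (cswap (ctens_ob A B) C) (cassoc A B C))
      = ccomp (ctens (cswap A C) (cid B))
          (ccomp (cassoc A C B) (ctens (cid A) (cswap B C)));
  copy_counit_l : forall A : cob D,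
      ccomp (clunit A) (ccomp (ctens (cdel A) (cid A)) (ccopy A)) = cid A;
  copy_counit_r : forall A : cob D,
      ccomp (crunit A) (ccomp (ctens (cid A) (cdel A)) (ccopy A)) = cid A;
  copy_coassoc : forall A : cob D,
      ccomp (cassoc A A A) (ccomp (ctens (cid A) (ccopy A)) (ccopy A))
      = ccomp (ctens (ccopy A) (cid A)) (ccopy A);
  copy_cocomm : forall A : cob D, ccomp (cswap A A) (ccopy A) = ccopy A;
  copy_tens : forall A B : cob D,
      ccopy (ctens_ob A B)
      = ccomp (cassoc A B (ctens_ob A B))
         (ccomp (ctens (cid A) (cassoc_inv B A B))
          (ccomp (ctens (cid A) (ctens (cswap A B) (cid B)))
           (ccomp (ctens (cid A) (cassoc A B B))
            (ccomp (cassoc_inv A A (ctens_ob B B))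
                   (ctens (ccopy A) (ccopy B))))));
  del_tens : forall A B : cob D,
      cdel (ctens_ob A B) = ccomp (clunit cunit) (ctens (cdel A) (cdel B));
  copy_unit : ccopy (@cunit D) = clunit_inv cunit;
  del_unit : cdel (@cunit D) = cid cunit
}.

Record FCDCat := { fc_data :> CDData; fc_laws : CD_laws fc_data }.

(* Linear polynomials a x + b, represented as (a, b), with the componentwise order *)
Definition lpoly := (nat * nat)%type.
Definition lpoly_le (p q : lpoly) : Prop := fst p <= fst q /\ snd p <= snd q.
Definition lpoly_add (p q : lpoly) : lpoly := (fst p + fst q, snd p + snd q).

(* A variable / signature X -> Y with degree a x + b. *)
Record Var (D : CDData) := mkVar { vsrc : cob D; vtgt : cob D; va : nat; vb : nat }.
Arguments mkVar {D} _ _ _ _.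

Definition dflt_var (D : CDData) : Var D := mkVar (@cunit D) (@cunit D) 0 0.

Inductive term (D : CDData) : Type :=
| tmD : forall A B : cob D, chom A B -> term D
| tmGen : nat -> term D
| tmComp : term D -> term D -> term D                 (* tmComp g f = g o f *)
| tmTens : term D -> term D -> term D.
Arguments tmGen {D} _.
Arguments tmD {D A B} _.

Section Free.
Variable D : CDData.
Variable ctx : list (Var D).

Inductive has_type : term D -> cob D -> cob D -> Prop :=
| ht_D : forall A B (f : chom A B), has_type (tmD f) A B
| ht_Gen : forall i, i < length ctx ->
    has_type (tmGen i) (vsrc (nth i ctx (dflt_var D))) (vtgt (nth i ctx (dflt_var D)))
| ht_Comp : forall t u A B C, has_type t B C -> has_type u A B -> has_type (tmComp t u) A C
| ht_Tens : forall t u A B A' B', has_type t A B -> has_type u A' B' ->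
    has_type (tmTens t u) (ctens_ob A A') (ctens_ob B B').

(* Congruence presenting the free symmetric monoidal category over D
   (D-operations agree with D's, category laws, functoriality of the tensor,
   naturality of the structural isomorphisms of D). *)
Inductive tequiv : term D -> term D -> Prop :=
| te_refl : forall t, tequiv t t
| te_sym : forall t u, tequiv t u -> tequiv u t
| te_trans : forall t u v, tequiv t u -> tequiv u v -> tequiv t v
| te_comp_cong : forall t t' u u', tequiv t t' -> tequiv u u' ->
    tequiv (tmComp t u) (tmComp t' u')
| te_tens_cong : forall t t' u u', tequiv t t' -> tequiv u u' ->
    tequiv (tmTens t u) (tmTens t' u')
| te_D_comp : forall A B C (g : chom B C) (f : chom A B),
    tequiv (tmComp (tmD g) (tmD f)) (tmD (ccomp g f))
| te_D_tens : forall A B A' B' (f : chom A B) (g : chom A' B'),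
    tequiv (tmTens (tmD f) (tmD g)) (tmD (ctens f g))
| te_id_l : forall t A B, has_type t A B -> tequiv (tmComp (tmD (cid B)) t) t
| te_id_r : forall t A B, has_type t A B -> tequiv (tmComp t (tmD (cid A))) t
| te_assoc : forall t u v, tequiv (tmComp t (tmComp u v)) (tmComp (tmComp t u) v)
| te_interchange : forall t1 t2 u1 u2,
    tequiv (tmComp (tmTens t1 t2) (tmTens u1 u2)) (tmTens (tmComp t1 u1) (tmComp t2 u2))
| te_assoc_nat : forall t1 t2 t3 A1 B1 A2 B2 A3 B3,
    has_type t1 A1 B1 -> has_type t2 A2 B2 -> has_type t3 A3 B3 ->
    tequiv (tmComp (tmTens (tmTens t1 t2) t3) (tmD (cassoc A1 A2 A3)))
           (tmComp (tmD (cassoc B1 B2 B3)) (tmTens t1 (tmTens t2 t3)))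
| te_assoc_inv_nat : forall t1 t2 t3 A1 B1 A2 B2 A3 B3,
    has_type t1 A1 B1 -> has_type t2 A2 B2 -> has_type t3 A3 B3 ->
    tequiv (tmComp (tmTens t1 (tmTens t2 t3)) (tmD (cassoc_inv A1 A2 A3)))
           (tmComp (tmD (cassoc_inv B1 B2 B3)) (tmTens (tmTens t1 t2) t3))
| te_lunit_nat : forall t A B, has_type t A B ->
    tequiv (tmComp t (tmD (clunit A))) (tmComp (tmD (clunit B)) (tmTens (tmD (cid cunit)) t))
| te_lunit_inv_nat : forall t A B, has_type t A B ->
    tequiv (tmComp (tmTens (tmD (cid cunit)) t) (tmD (clunit_inv A))) (tmComp (tmD (clunit_inv B)) t)
| te_runit_nat : forall t A B, has_type t A B ->
    tequiv (tmComp t (tmD (crunit A))) (tmComp (tmD (crunit B)) (tmTens t (tmD (cid cunit))))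
| te_runit_inv_nat : forall t A B, has_type t A B ->
    tequiv (tmComp (tmTens t (tmD (cid cunit))) (tmD (crunit_inv A))) (tmComp (tmD (crunit_inv B)) t)
| te_swap_nat : forall t1 t2 A1 B1 A2 B2,
    has_type t1 A1 B1 -> has_type t2 A2 B2 ->
    tequiv (tmComp (tmTens t2 t1) (tmD (cswap A1 A2)))
           (tmComp (tmD (cswap B1 B2)) (tmTens t1 t2)).

Fixpoint tdeg (t : term D) : lpoly :=
  match t with
  | tmD f => (0, cdeg f)
  | tmGen i => (va (nth i ctx (dflt_var D)), vb (nth i ctx (dflt_var D)))
  | tmComp t u => lpoly_add (tdeg t) (tdeg u)
  | tmTens t u => lpoly_add (tdeg t) (tdeg u)
  end.
End Free.

Fixpoint gen_count (D : CDData) (i : nat) (t : term D) : nat :=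
  match t with
  | tmD _ => 0
  | tmGen j => if Nat.eqb i j then 1 else 0
  | tmComp t u => gen_count i t + gen_count i u
  | tmTens t u => gen_count i t + gen_count i u
  end.

Fixpoint tsubst (D : CDData) (sigma : nat -> term D) (t : term D) : term D :=
  match t with
  | tmD f => tmD f
  | tmGen i => sigma i
  | tmComp t u => tmComp (tsubst sigma t) (tsubst sigma u)
  | tmTens t u => tmTens (tsubst sigma t) (tsubst sigma u)
  end.
Definition trename (D : CDData) (r : nat -> nat) (t : term D) : term D :=
  tsubst (fun i => tmGen (r i)) t.

Record SObj (D : CDData) := mkSObj { St : Type; SV : St -> list (Var D) }.

(* Raw data of a morphism: state transition and output function
   (output for the j-th variable at the new state). *)
Record SHom (D : CDData) (A B : SObj D) := mkSHom {
  smap : St A -> St B;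
  sout : St A -> nat -> term D }.
Arguments mkSHom {D A B} _ _.
Arguments smap {D A B} _ _.
Arguments sout {D A B} _ _ _.

Section StateCat.
Variable D : CDData.

Definition out_var (A B : SObj D) (f : SHom A B) (s : St A) (j : nat) : Var D :=
  nth j (SV B (smap f s)) (dflt_var D).

Definition S_wt (A B : SObj D) (f : SHom A B) : Prop :=
  forall (s : St A) (j : nat), j < length (SV B (smap f s)) ->
    has_type (SV A s) (sout f s j) (vsrc (out_var f s j)) (vtgt (out_var f s j)).

Definition S_bounded (A B : SObj D) (f : SHom A B) (l : nat) : Prop :=
  forall (s : St A) (j : nat), j < length (SV B (smap f s)) ->
    lpoly_le (tdeg (SV A s) (sout f s j))
             (va (out_var f s j), va (out_var f s j) * l + vb (out_var f s j)).

Definition S_equiv (A B : SObj D) (f g : SHom A B) : Prop :=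
  (forall s, smap f s = smap g s) /\
  (forall s j, j < length (SV B (smap f s)) -> tequiv (SV A s) (sout f s j) (sout g s j)).

Definition S_deg_le (A B : SObj D) (f : SHom A B) (l : nat) : Prop :=
  exists g : SHom A B, S_equiv f g /\ S_wt g /\ S_bounded g l.

Definition S_id (A : SObj D) : SHom A A := mkSHom (fun s => s) (fun _ j => tmGen j).

Definition S_comp (A B C : SObj D) (g : SHom B C) (f : SHom A B) : SHom A C :=
  mkSHom (fun s => smap g (smap f s))
         (fun s j => tsubst (sout f s) (sout g (smap f s) j)).

Definition S_tens_ob (A B : SObj D) : SObj D :=
  @mkSObj D (St A * St B)%type (fun p => SV A (fst p) ++ SV B (snd p)).

Definition S_unit : SObj D := @mkSObj D unit (fun _ => []).

Definition S_tens (A B A' B' : SObj D) (f : SHom A B) (g : SHom A' B') :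
    SHom (S_tens_ob A A') (S_tens_ob B B') :=
  @mkSHom D (S_tens_ob A A') (S_tens_ob B B') (fun p : St A * St A' => (smap f (fst p), smap g (snd p)))
    (fun (p : St A * St A') j =>
       let n := length (SV B (smap f (fst p))) in
       if Nat.ltb j n then sout f (fst p) j
       else trename (fun i => i + length (SV A (fst p))) (sout g (snd p) (j - n))).

Definition S_relabel (A B : SObj D) (h : St A -> St B) : SHom A B :=
  mkSHom h (fun _ j => tmGen j).

Definition S_assoc (A B C : SObj D) :
    SHom (S_tens_ob A (S_tens_ob B C)) (S_tens_ob (S_tens_ob A B) C) :=
  @S_relabel (S_tens_ob A (S_tens_ob B C)) (S_tens_ob (S_tens_ob A B) C) (fun p : St A * (St B * St C) => ((fst p, fst (snd p)), snd (snd p))).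
Definition S_lunit (A : SObj D) : SHom (S_tens_ob S_unit A) A :=
  @S_relabel (S_tens_ob S_unit A) A (fun p : unit * St A => snd p).
Definition S_runit (A : SObj D) : SHom (S_tens_ob A S_unit) A :=
  @S_relabel (S_tens_ob A S_unit) A (fun p : St A * unit => fst p).
End StateCat.

Record SFunctor (C D : FCDCat) := mkSFunctor {
  Fob : cob C -> SObj D;
  Fhom : forall A B : cob C, chom A B -> SHom (Fob A) (Fob B);
  Fphi : forall A B : cob C,
      SHom (S_tens_ob (Fob A) (Fob B)) (Fob (ctens_ob A B));
  Fphi_inv : forall A B : cob C,
      SHom (Fob (ctens_ob A B)) (S_tens_ob (Fob A) (Fob B));
  Fphi0 : SHom (S_unit D) (Fob cunit);
  Fphi0_inv : SHom (Fob cunit) (S_unit D)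
}.
Arguments Fob {C D} _ _.
Arguments Fhom {C D} _ {A B} _.
Arguments Fphi {C D} _ _ _.
Arguments Fphi_inv {C D} _ _ _.
Arguments Fphi0 {C D} _.
Arguments Fphi0_inv {C D} _.

Record strong_monoidal_filtered (C D : FCDCat) (F : SFunctor C D) : Prop := {
  F_wt : forall (A B : cob C) (f : chom A B), S_wt (Fhom F f);
  Fphi_wt : forall A B : cob C, S_wt (Fphi F A B);
  Fphi_inv_wt : forall A B : cob C, S_wt (Fphi_inv F A B);
  Fphi0_wt : S_wt (Fphi0 F);
  Fphi0_inv_wt : S_wt (Fphi0_inv F);
  F_filtered : forall (A B : cob C) (f : chom A B), S_deg_le (Fhom F f) (cdeg f);
  F_id : forall A : cob C, S_equiv (Fhom F (cid A)) (S_id _);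
  F_comp : forall (A B E : cob C) (g : chom B E) (f : chom A B),
      S_equiv (Fhom F (ccomp g f)) (S_comp (Fhom F g) (Fhom F f));
  Fphi_iso1 : forall A B : cob C, S_equiv (S_comp (Fphi_inv F A B) (Fphi F A B)) (S_id _);
  Fphi_iso2 : forall A B : cob C, S_equiv (S_comp (Fphi F A B) (Fphi_inv F A B)) (S_id _);
  Fphi0_iso1 : S_equiv (S_comp (Fphi0_inv F) (Fphi0 F)) (S_id _);
  Fphi0_iso2 : S_equiv (S_comp (Fphi0 F) (Fphi0_inv F)) (S_id _);
  Fphi_nat : forall (A B A' B' : cob C) (f : chom A A') (g : chom B B'),
      S_equiv (S_comp (Fphi F A' B') (S_tens (Fhom F f) (Fhom F g)))
              (S_comp (Fhom F (ctens f g)) (Fphi F A B));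
  F_assoc_coh : forall A B E : cob C,
      S_equiv (S_comp (Fhom F (cassoc A B E))
                 (S_comp (Fphi F A (ctens_ob B E)) (S_tens (S_id _) (Fphi F B E))))
              (S_comp (Fphi F (ctens_ob A B) E)
                 (S_comp (S_tens (Fphi F A B) (S_id _)) (S_assoc _ _ _)));
  F_lunit_coh : forall A : cob C,
      S_equiv (S_comp (Fhom F (clunit A))
                 (S_comp (Fphi F cunit A) (S_tens (Fphi0 F) (S_id _))))
              (S_lunit _);
  F_runit_coh : forall A : cob C,
      S_equiv (S_comp (Fhom F (crunit A))
                 (S_comp (Fphi F A cunit) (S_tens (S_id _) (Fphi0 F))))
              (S_runit _)
}.

Definition is_prefix (T : Type) (l1 l2 : list T) : Prop := exists l3, l2 = l1 ++ l3.

Definition var_sig (D : CDData) (v : Var D) : (cob D * cob D)%type := (vsrc v, vtgt v).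

Record FDTransducer := mkFDT {
  tr_C : FCDCat;
  tr_D : FCDCat;
  tr_X : cob tr_C;
  tr_Y : cob tr_C;
  tr_aux : list (cob tr_D * cob tr_D);
  tr_out : list (cob tr_D * cob tr_D);
  tr_F : SFunctor tr_C tr_D;
  tr_F_sm : strong_monoidal_filtered tr_F;
  tr_in_prefix : forall s : St (Fob tr_F tr_X),
      is_prefix (map (@var_sig tr_D) (SV _ s)) tr_aux;
  tr_out_prefix : forall t : St (Fob tr_F tr_Y),
      is_prefix tr_out (map (@var_sig tr_D) (SV _ t))
}.

(* Main.v *)
Require Import Defs.
From Stdlib Require Import List Arith Lia.
Import ListNotations.

Lemma tequiv_count (D : CDData) (ctx : list (Var D)) (t u : term D) i :
  tequiv ctx t u -> gen_count i t = gen_count i u.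
Proof. induction 1; simpl; lia. Qed.

Lemma typed_count (D : CDData) (ctx : list (Var D)) (t : term D) A B i :
  (forall v, In v ctx -> va v <> 0) ->
  has_type ctx t A B -> gen_count i t <= fst (tdeg ctx t).
Proof.
  intros Hv H; induction H; simpl; try lia.
  destruct (Nat.eqb i i0); [|lia].
  assert (va (nth i0 ctx (dflt_var D)) <> 0) by (apply Hv, nth_In; auto). lia.
Qed.

Lemma nth_le_sum (D : CDData) (L : list (Var D)) j :
  va (nth j L (dflt_var D)) <= list_sum (map (@va D) L).
Proof.
  revert j; induction L as [|v L IH]; intros [|j]; simpl; try lia.
  specialize (IH j); lia.
Qed.

Lemma in_le_sum (X : Type) (f : X -> nat) (l : list X) x :
  In x l -> f x <= list_sum (map f l).
Proof.
  induction l as [|y l IH]; simpl; [tauto|]. intros [->|H]; [lia|]. specialize (IH H); lia.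
Qed.

Theorem proposition3p11 (T : FDTransducer)
  (Hfin : exists l : list (St (Fob (tr_F T) (tr_Y T))), forall t, In t l)
  (Hlin : forall (x : St (Fob (tr_F T) (tr_X T))) (v : Var (tr_D T)),
      In v (SV _ x) -> va v <> 0) :
  exists k : nat,
    forall (x : St (Fob (tr_F T) (tr_X T))) (alpha : chom (tr_X T) (tr_Y T))
           (j i : nat),
      j < length (tr_out T) -> i < length (tr_aux T) ->
      gen_count i (sout (Fhom (tr_F T) alpha) x j) <= k.
Proof.
  destruct Hfin as [l Hl].
  exists (list_sum (map (fun t => list_sum (map (@va _) (SV _ t))) l)).
  intros x alpha j i Hj Hi.
  destruct (F_filtered (tr_F_sm T) _ _ alpha) as [g [[Hs Ho] [Hwt Hb]]].
  set (t := smap (Fhom (tr_F T) alpha) x).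
  assert (Hlen : j < length (SV _ t)).
  { destruct (tr_out_prefix T t) as [l3 E].
    apply (f_equal (@length _)) in E. rewrite length_map, length_app in E. lia. }
  pose proof (Ho x j Hlen) as Heq.
  rewrite (@tequiv_count _ _ _ _ i Heq).
  assert (Hlen' : j < length (SV _ (smap g x))) by (rewrite <- Hs; exact Hlen).
  specialize (Hwt x j Hlen'). specialize (Hb x j Hlen').
  eapply Nat.le_trans. { eapply typed_count; [|exact Hwt]. apply Hlin. }
  destruct Hb as [Hb _]. simpl in Hb. eapply Nat.le_trans; [exact Hb|].
  unfold out_var. rewrite <- Hs. fold t.
  eapply Nat.le_trans; [apply nth_le_sum|].
  apply (in_le_sum _ (fun t0 : St (Fob (tr_F T) (tr_Y T)) => list_sum (map (@va _) (SV _ t0))) l t). apply Hl.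
Qed.
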